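(* Let $\Lambda$ be a level-sentence set for a language $\mathcal L$. Let $A$ be a set of first-order $\mathcal L$-sentences and $\phi$ an $\mathcal L$-sentence such that $A\not\vdash\phi\leftrightarrow\psi$ for every $\psi\in\neg\Lambda$. Then there are complete consistent theories $T^+\supseteq A\cup\{\phi\}$ and $T^-\supseteq A\cup\{\neg\phi\}$ such that $\Lambda\cap T^-\subseteq\Lambda\cap T^+$. Furthermore, if $T$ is any theory consistent with $A\cup\{\phi\}\cup\mathrm{Th}_\Lambda(A\cup\{\neg\phi\})$, then $T^+$ can be chosen to contain $T$.
   Context: A level-sentence set for $\mathcal L$ is either the set of all $\exists_n$-sentences or the set of all $\forall_n$-sentences of $\mathcal L$, for some $n$ (prenex sentences with $n$ alternating quantifier blocks starting with $\exists$, resp. $\forall$). For a level-sentence set $\Lambda$, $\neg\Lambda$ is the set of sentences logically equivalent to the negation of a sentence in $\Lambda$. For a theory $T$, $\mathrm{Th}_\Lambda(T)=\Lambda\cap\overline T$, where $\overline T$ is the deductive closure of $T$. Complete theories are taken deductively closed. *)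

(* Defs.v *)
From Stdlib Require Import Arith Fin.
Set Implicit Arguments.

(* A first-order language: function and relation symbols with arities
   (constants are 0-ary function symbols). *)
Record language : Type := {
  funs : Type;
  rels : Type;
  fun_ar : funs -> nat;
  rel_ar : rels -> nat }.

Section Syntax.
Variable L : language.

Inductive term : Type :=
| var : nat -> term
| func : forall f : funs L, (Fin.t (fun_ar L f) -> term) -> term.

Inductive form : Type :=
| fbot : form
| feq : term -> term -> form
| frel : forall R : rels L, (Fin.t (rel_ar L R) -> term) -> form
| fneg : form -> form
| fand : form -> form -> form
| for_ : form -> form -> form
| fimp : form -> form -> form
| fall : form -> form   (* binds de Bruijn index 0 *)
| fex : form -> form.

Definition fiff (p q : form) : form := fand (fimp p q) (fimp q p).

Fixpoint bound_t (n : nat) (t : term) : Prop :=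
  match t with
  | var k => k < n
  | func f v => forall i, bound_t n (v i)
  end.

Fixpoint bound_f (n : nat) (p : form) : Prop :=
  match p with
  | fbot => True
  | feq t u => bound_t n t /\ bound_t n u
  | frel R v => forall i, bound_t n (v i)
  | fneg q => bound_f n q
  | fand q r | for_ q r | fimp q r => bound_f n q /\ bound_f n r
  | fall q | fex q => bound_f (S n) q
  end.

Definition sentence (p : form) : Prop := bound_f 0 p.

Fixpoint qfree (p : form) : Prop :=
  match p with
  | fbot | feq _ _ | frel _ _ => True
  | fneg q => qfree q
  | fand q r | for_ q r | fimp q r => qfree q /\ qfree r
  | fall _ | fex _ => False
  end.

(* Prenex classes: isEx n p  <-> p is prenex with n alternating quantifier
   blocks starting with an existential block (blocks may be empty);
   isAll n p dually. Level 0 = quantifier-free. *)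
Inductive isEx : nat -> form -> Prop :=
| isEx0 p : qfree p -> isEx 0 p
| isEx_lift n p : isAll n p -> isEx (S n) p
| isEx_q n p : isEx (S n) p -> isEx (S n) (fex p)
with isAll : nat -> form -> Prop :=
| isAll0 p : qfree p -> isAll 0 p
| isAll_lift n p : isEx n p -> isAll (S n) p
| isAll_q n p : isAll (S n) p -> isAll (S n) (fall p).

End Syntax.

Arguments var {L}.
Arguments fbot {L}.

Record structure (L : language) : Type := {
  dom : Type;
  dom_inh : inhabited dom;
  interp_f : forall f : funs L, (Fin.t (fun_ar L f) -> dom) -> dom;
  interp_r : forall R : rels L, (Fin.t (rel_ar L R) -> dom) -> Prop }.

Definition scons {D : Type} (d : D) (rho : nat -> D) : nat -> D :=
  fun k => match k with 0 => d | S k => rho k end.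

Fixpoint eval_t {L} (M : structure L) (rho : nat -> dom M) (t : term L)
  : dom M :=
  match t with
  | var k => rho k
  | func f v => interp_f M f (fun i => eval_t M rho (v i))
  end.

Fixpoint holds {L} (M : structure L) (rho : nat -> dom M) (p : form L)
  : Prop :=
  match p with
  | fbot => False
  | feq t u => eval_t M rho t = eval_t M rho u
  | frel R v => interp_r M R (fun i => eval_t M rho (v i))
  | fneg q => ~ holds M rho q
  | fand q r => holds M rho q /\ holds M rho r
  | for_ q r => holds M rho q \/ holds M rho r
  | fimp q r => holds M rho q -> holds M rho r
  | fall q => forall d, holds M (scons d rho) q
  | fex q => exists d, holds M (scons d rho) q
  end.

(* M |= p (for sentences the environment is irrelevant) *)
Definition models {L} (M : structure L) (p : form L) : Prop :=
  forall rho, holds M rho p.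

Definition fset (L : language) := form L -> Prop.

Definition is_theory {L} (T : fset L) : Prop := forall p, T p -> sentence p.

Definition models_set {L} (M : structure L) (T : fset L) : Prop :=
  forall p, T p -> models M p.

(* T |- p, read via the completeness theorem as semantic consequence *)
Definition entails {L} (T : fset L) (p : form L) : Prop :=
  forall M : structure L, models_set M T -> models M p.

Definition consistent {L} (T : fset L) : Prop :=
  exists M : structure L, models_set M T.

Definition closure {L} (T : fset L) : fset L :=
  fun p => sentence p /\ entails T p.

Definition deductively_closed {L} (T : fset L) : Prop :=
  forall p, sentence p -> entails T p -> T p.

Definition complete {L} (T : fset L) : Prop :=
  forall p, sentence p -> entails T p \/ entails T (fneg p).

Definition complete_consistent_theory {L} (T : fset L) : Prop :=
  is_theory T /\ deductively_closed T /\ complete T /\ consistent T.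

Definition fsubset {L} (A B : fset L) : Prop := forall p, A p -> B p.
Definition funion {L} (A B : fset L) : fset L := fun p => A p \/ B p.
Definition fsingle {L} (q : form L) : fset L := fun p => p = q.
Definition finter {L} (A B : fset L) : fset L := fun p => A p /\ B p.

(* Level-sentence sets: all exists_n sentences or all forall_n sentences *)
Inductive qkind := KEx | KAll.

Definition level_set {L} (k : qkind) (n : nat) : fset L :=
  fun p => sentence p /\
    match k with KEx => isEx n p | KAll => isAll n p end.

Definition neg_set {L} (Lam : fset L) : fset L :=
  fun q => sentence q /\
    exists p, Lam p /\ entails (fun _ => False) (fiff q (fneg p)).

Definition Th {L} (Lam T : fset L) : fset L := finter Lam (closure T).

(* Main.v *)
Require Import Defs.
From Stdlib Require Import Arith Lia List Classical ClassicalEpsilon FunctionalExtensionality PropExtensionality ProofIrrelevance.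
From mathcomp Require ssreflect boolp classical_sets filter.

Module UF.
Import ssreflect boolp classical_sets filter.
Lemma ultra_exists (I : Type) (F : (I -> Prop) -> Prop) :
  F (fun _ => True) ->
  (forall X Y, F X -> F Y -> F (fun i => X i /\ Y i)) ->
  (forall X Y : I -> Prop, (forall i, X i -> Y i) -> F X -> F Y) ->
  ~ F (fun _ => False) ->
  exists U : (I -> Prop) -> Prop,
    (forall X, F X -> U X) /\
    (forall X Y, U X -> U Y -> U (fun i => X i /\ Y i)) /\
    (forall X Y : I -> Prop, (forall i, X i -> Y i) -> U X -> U Y) /\
    ~ U (fun _ => False) /\
    (forall X, U X \/ U (fun i => ~ X i)).
Proof.
move=> FT FI FS F0.
have PF : ProperFilter F.
  split; first by [].
  split; [by [] | move=> X Y; exact: FI | move=> X Y H; exact: FS].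
have [G [GU sFG]] := ultraFilterLemma PF.
exists G; split; first by [].
have GF : ProperFilter G by apply: ultra_proper.
split; first by move=> X Y; exact: filterI.
split; first by move=> X Y H; exact: filterS.
split; first exact: filter_not_empty.
move=> X; exact: (in_ultra_setVsetC X GU).
Qed.
End UF.
Unset Implicit Arguments.
Unset Strict Implicit.


Section Syn.
Variable L : language.

Lemma eval_ext (M : structure L) (rho rho' : nat -> dom M) t :
  (forall k, rho k = rho' k) -> eval_t M rho t = eval_t M rho' t.
Proof.
  intro H; induction t as [k|f v IH]; simpl; auto.
  f_equal; apply functional_extensionality; auto.
Qed.

Lemma holds_ext (M : structure L) p : forall (rho rho' : nat -> dom M),
  (forall k, rho k = rho' k) -> (holds M rho p <-> holds M rho' p).
Proof.
  induction p; intros rho rho' H; simpl.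
  - tauto.
  - rewrite (eval_ext M rho rho' t H), (eval_ext M rho rho' t0 H); tauto.
  - assert (E : (fun i => eval_t M rho (t i)) = (fun i => eval_t M rho' (t i))).
    { apply functional_extensionality; intro; apply eval_ext; auto. }
    rewrite E; tauto.
  - rewrite (IHp rho rho' H); tauto.
  - rewrite (IHp1 rho rho' H), (IHp2 rho rho' H); tauto.
  - rewrite (IHp1 rho rho' H), (IHp2 rho rho' H); tauto.
  - rewrite (IHp1 rho rho' H), (IHp2 rho rho' H); tauto.
  - split; intros H1 d; specialize (H1 d);
      [rewrite <- (IHp (scons d rho) (scons d rho')) | rewrite (IHp (scons d rho) (scons d rho'))];
      auto; intros [|k]; simpl; auto.
  - split; intros [d H1]; exists d;
      [rewrite <- (IHp (scons d rho) (scons d rho')) | rewrite (IHp (scons d rho) (scons d rho'))];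
      auto; intros [|k]; simpl; auto.
Qed.

Lemma eval_bound (M : structure L) (rho rho' : nat -> dom M) n t :
  bound_t n t -> (forall k, k < n -> rho k = rho' k) -> eval_t M rho t = eval_t M rho' t.
Proof.
  intros Hb H; induction t as [k|f v IH]; simpl in *; auto.
  f_equal; apply functional_extensionality; auto.
Qed.

Lemma holds_bound (M : structure L) p : forall n (rho rho' : nat -> dom M),
  bound_f n p -> (forall k, k < n -> rho k = rho' k) -> (holds M rho p <-> holds M rho' p).
Proof.
  induction p; intros n rho rho' Hb H; simpl in *.
  - tauto.
  - destruct Hb. rewrite (eval_bound M rho rho' n t), (eval_bound M rho rho' n t0); auto; tauto.
  - assert (E : (fun i => eval_t M rho (t i)) = (fun i => eval_t M rho' (t i))).
    { apply functional_extensionality; intro; eapply eval_bound; eauto. }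
    rewrite E; tauto.
  - rewrite (IHp n rho rho' Hb H); tauto.
  - destruct Hb; rewrite (IHp1 n rho rho'), (IHp2 n rho rho'); auto; tauto.
  - destruct Hb; rewrite (IHp1 n rho rho'), (IHp2 n rho rho'); auto; tauto.
  - destruct Hb; rewrite (IHp1 n rho rho'), (IHp2 n rho rho'); auto; tauto.
  - assert (HH : forall d, forall k, k < S n -> scons d rho k = scons d rho' k).
    { intros d [|k] Hk; simpl; auto; apply H; lia. }
    split; intros H1 d; specialize (H1 d);
      [rewrite <- (IHp (S n) (scons d rho) (scons d rho')) | rewrite (IHp (S n) (scons d rho) (scons d rho'))];
      auto.
  - assert (HH : forall d, forall k, k < S n -> scons d rho k = scons d rho' k).
    { intros d [|k] Hk; simpl; auto; apply H; lia. }
    split; intros [d H1]; exists d;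
      [rewrite <- (IHp (S n) (scons d rho) (scons d rho')) | rewrite (IHp (S n) (scons d rho) (scons d rho'))];
      auto.
Qed.

Lemma sent_holds (M : structure L) p rho rho' :
  sentence p -> holds M rho p -> holds M rho' p.
Proof.
  intros Hs H. apply (holds_bound M p 0 rho rho' Hs); auto. intros; lia.
Qed.

Definition up (xi : nat -> nat) : nat -> nat :=
  fun k => match k with 0 => 0 | S k => S (xi k) end.

Fixpoint ren_t (xi : nat -> nat) (t : term L) : term L :=
  match t with
  | var k => var (xi k)
  | func f v => func f (fun i => ren_t xi (v i))
  end.

Fixpoint ren_f (xi : nat -> nat) (p : form L) : form L :=
  match p with
  | fbot => fbot
  | feq t u => feq (ren_t xi t) (ren_t xi u)
  | frel R v => frel R (fun i => ren_t xi (v i))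
  | fneg q => fneg (ren_f xi q)
  | fand q r => fand (ren_f xi q) (ren_f xi r)
  | for_ q r => for_ (ren_f xi q) (ren_f xi r)
  | fimp q r => fimp (ren_f xi q) (ren_f xi r)
  | fall q => fall (ren_f (up xi) q)
  | fex q => fex (ren_f (up xi) q)
  end.

Lemma eval_ren (M : structure L) rho xi t :
  eval_t M rho (ren_t xi t) = eval_t M (fun k => rho (xi k)) t.
Proof.
  induction t as [k|f v IH]; simpl; auto.
  f_equal; apply functional_extensionality; auto.
Qed.

Lemma holds_ren (M : structure L) p : forall xi rho,
  holds M rho (ren_f xi p) <-> holds M (fun k => rho (xi k)) p.
Proof.
  induction p; intros xi rho; simpl.
  - tauto.
  - rewrite !eval_ren; tauto.
  - assert (E : (fun i => eval_t M rho (ren_t xi (t i))) = (fun i => eval_t M (fun k => rho (xi k)) (t i))).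
    { apply functional_extensionality; intro; apply eval_ren. }
    rewrite E; tauto.
  - rewrite IHp; tauto.
  - rewrite IHp1, IHp2; tauto.
  - rewrite IHp1, IHp2; tauto.
  - rewrite IHp1, IHp2; tauto.
  - assert (HH : forall d, holds M (scons d rho) (ren_f (up xi) p) <-> holds M (scons d (fun k => rho (xi k))) p).
    { intro d; rewrite IHp; apply holds_ext; intros [|k]; reflexivity. }
    split; intros H1 d; apply HH; auto; apply HH; auto.
  - assert (HH : forall d, holds M (scons d rho) (ren_f (up xi) p) <-> holds M (scons d (fun k => rho (xi k))) p).
    { intro d; rewrite IHp; apply holds_ext; intros [|k]; reflexivity. }
    split; intros [d H1]; exists d; apply HH; auto.
Qed.

Lemma holds_lift (M : structure L) p d rho :
  holds M (scons d rho) (ren_f S p) <-> holds M rho p.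
Proof. rewrite holds_ren. apply holds_ext; reflexivity. Qed.

Lemma bound_ren_t t : forall m m' xi, (forall k, k < m -> xi k < m') ->
  bound_t m t -> bound_t m' (ren_t xi t).
Proof. induction t as [k|f v IH]; simpl; intros; eauto. Qed.

Lemma bound_ren p : forall m m' xi, (forall k, k < m -> xi k < m') ->
  bound_f m p -> bound_f m' (ren_f xi p).
Proof.
  induction p; simpl; intros m m' xi Hx Hb; try tauto.
  - destruct Hb; split; eapply bound_ren_t; eauto.
  - intros; eapply bound_ren_t; eauto.
  - eauto.
  - destruct Hb; split; eauto.
  - destruct Hb; split; eauto.
  - destruct Hb; split; eauto.
  - apply (IHp (S m)); auto. intros [|k] Hk; simpl; try lia. specialize (Hx k); lia.
  - apply (IHp (S m)); auto. intros [|k] Hk; simpl; try lia. specialize (Hx k); lia.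
Qed.

Lemma qfree_ren p xi : qfree p -> qfree (ren_f xi p).
Proof. revert xi; induction p; simpl; intros; tauto || (split; firstorder) || firstorder. Qed.

Fixpoint fsize (p : form L) : nat :=
  match p with
  | fbot | feq _ _ | frel _ _ => 1
  | fneg q => S (fsize q)
  | fand q r | for_ q r | fimp q r => S (fsize q + fsize r)
  | fall q | fex q => S (fsize q)
  end.

Lemma fsize_ren p : forall xi, fsize (ren_f xi p) = fsize p.
Proof. induction p; simpl; intros; auto. Qed.

Lemma lvl_ren n : forall p xi, (isEx n p -> isEx n (ren_f xi p)) /\ (isAll n p -> isAll n (ren_f xi p)).
Proof.
  induction n as [|n IHn]; intros p xi.
  - split; intro H; inversion H; subst; constructor; apply qfree_ren; auto.
  - revert xi; induction p; intro xi; split; intro H; inversion H; subst;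
      try solve [apply isEx_lift; apply IHn; auto];
      try solve [apply isAll_lift; apply IHn; auto].
    + simpl; apply isAll_q. apply IHp; auto.
    + simpl; apply isEx_q. apply IHp; auto.
Qed.

End Syn.
Arguments ren_f {L}. Arguments ren_t {L}. Arguments fsize {L}.

Set Implicit Arguments.
Section Comb.
Variable L : language.

Definition bop (b : bool) : form L -> form L -> form L := if b then @fand L else @for_ L.
Definition bsem (b : bool) (P Q : Prop) : Prop := if b then P /\ Q else P \/ Q.

Lemma holds_bop M rho b p q : holds M rho (bop b p q) <-> bsem b (holds M rho p) (holds M rho q).
Proof. destruct b; simpl; tauto. Qed.

Lemma qfree_bop b p q : qfree p -> qfree q -> qfree (bop b p q).
Proof. destruct b; simpl; tauto. Qed.

Lemma bound_bop b m p q : bound_f m p -> bound_f m q -> bound_f m (bop b p q).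
Proof. destruct b; simpl; tauto. Qed.

Lemma ex_l M rho b p q : holds M rho (fex (bop b p (ren_f S q))) <-> bsem b (holds M rho (fex p)) (holds M rho q).
Proof.
  destruct (dom_inh M) as [d0].
  destruct b; simpl; split.
  - intros [d [H1 H2]]. rewrite holds_lift in H2. eauto.
  - intros [[d H1] H2]. exists d. rewrite holds_lift. auto.
  - intros [d [H1|H2]]; [left; eauto | right]. rewrite holds_lift in H2; auto.
  - intros [[d H1]|H2]; [exists d; auto| exists d0; right; rewrite holds_lift; auto].
Qed.

Lemma ex_r M rho b p q : holds M rho (fex (bop b (ren_f S p) q)) <-> bsem b (holds M rho p) (holds M rho (fex q)).
Proof.
  destruct (dom_inh M) as [d0].
  destruct b; simpl; split.
  - intros [d [H1 H2]]. rewrite holds_lift in H1. eauto.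
  - intros [H2 [d H1]]. exists d. rewrite holds_lift. auto.
  - intros [d [H1|H2]]; [left | right; eauto]. rewrite holds_lift in H1; auto.
  - intros [H2|[d H1]]; [exists d0; left; rewrite holds_lift; auto | exists d; auto].
Qed.

Lemma all_l M rho b p q : holds M rho (fall (bop b p (ren_f S q))) <-> bsem b (holds M rho (fall p)) (holds M rho q).
Proof.
  destruct (dom_inh M) as [d0].
  destruct b; simpl; split.
  - intros H. split; [intro d; apply H|]. destruct (H d0) as [_ H2]. rewrite holds_lift in H2; auto.
  - intros [H1 H2] d. rewrite holds_lift. auto.
  - intros H. destruct (classic (holds M rho q)) as [Hq|Hq]; [right; auto|left].
    intro d. destruct (H d) as [H1|H2]; auto. rewrite holds_lift in H2; tauto.
  - intros [H1|H2] d; [left; auto|right; rewrite holds_lift; auto].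
Qed.

Lemma all_r M rho b p q : holds M rho (fall (bop b (ren_f S p) q)) <-> bsem b (holds M rho p) (holds M rho (fall q)).
Proof.
  destruct (dom_inh M) as [d0].
  destruct b; simpl; split.
  - intros H. split; [|intro d; apply H]. destruct (H d0) as [H2 _]. rewrite holds_lift in H2; auto.
  - intros [H1 H2] d. rewrite holds_lift. auto.
  - intros H. destruct (classic (holds M rho p)) as [Hq|Hq]; [left; auto|right].
    intro d. destruct (H d) as [H1|H2]; auto. rewrite holds_lift in H1; tauto.
  - intros [H1|H2] d; [left; rewrite holds_lift; auto|right; auto].
Qed.

Lemma comb b n :
  (forall s (p q : form L) m, fsize p + fsize q <= s -> isEx n p -> isEx n q -> bound_f m p -> bound_f m q ->
     exists r : form L, isEx n r /\ bound_f m r /\ forall (M : structure L) rho, holds M rho r <-> bsem b (holds M rho p) (holds M rho q)) /\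
  (forall s (p q : form L) m, fsize p + fsize q <= s -> isAll n p -> isAll n q -> bound_f m p -> bound_f m q ->
     exists r : form L, isAll n r /\ bound_f m r /\ forall (M : structure L) rho, holds M rho r <-> bsem b (holds M rho p) (holds M rho q)).
Proof.
  induction n as [|n [IHE IHA]].
  - split; intros s p q m _ Hp Hq Bp Bq; exists (bop b p q);
      (split; [inversion Hp; inversion Hq; constructor; apply qfree_bop; auto
              | split; [apply bound_bop; auto | intros; apply holds_bop]]).
  - split; induction s as [|s IHs]; intros p q m Hs Hp Hq Bp Bq.
    + destruct p; simpl in Hs; lia.
    + inversion Hp as [ | n1 p1 Hp1 | n1 p1 Hp1]; subst.
      * inversion Hq as [ | n2 q2 Hq2 | n2 q2 Hq2]; subst.
        -- destruct (IHA (fsize p + fsize q) p q m (le_n _) Hp1 Hq2 Bp Bq) as [r [Hr [Br Sr]]].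
           exists r; split; [apply isEx_lift; auto| auto].
        -- destruct (IHs (ren_f S p) q2 (S m)) as [r [Hr [Br Sr]]].
           ++ rewrite fsize_ren; simpl in Hs; lia.
           ++ apply lvl_ren; auto.
           ++ auto.
           ++ eapply bound_ren; eauto; intros; lia.
           ++ simpl in Bq; auto.
           ++ exists (fex r); split; [apply isEx_q; auto| split; [simpl; auto|]].
              intros M rho. rewrite <- ex_r. split; intros [d Hd]; exists d; [apply holds_bop, Sr, Hd | apply Sr, holds_bop, Hd].
      * destruct (IHs p1 (ren_f S q) (S m)) as [r [Hr [Br Sr]]].
        -- rewrite fsize_ren; simpl in Hs; lia.
        -- auto.
        -- apply lvl_ren; auto.
        -- simpl in Bp; auto.
        -- eapply bound_ren; eauto; intros; lia.
        -- exists (fex r); split; [apply isEx_q; auto| split; [simpl; auto|]].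
           intros M rho. rewrite <- ex_l. split; intros [d Hd]; exists d; [apply holds_bop, Sr, Hd | apply Sr, holds_bop, Hd].
    + destruct p; simpl in Hs; lia.
    + inversion Hp as [ | n1 p1 Hp1 | n1 p1 Hp1]; subst.
      * inversion Hq as [ | n2 q2 Hq2 | n2 q2 Hq2]; subst.
        -- destruct (IHE (fsize p + fsize q) p q m (le_n _) Hp1 Hq2 Bp Bq) as [r [Hr [Br Sr]]].
           exists r; split; [apply isAll_lift; auto| auto].
        -- destruct (IHs (ren_f S p) q2 (S m)) as [r [Hr [Br Sr]]].
           ++ rewrite fsize_ren; simpl in Hs; lia.
           ++ apply lvl_ren; auto.
           ++ auto.
           ++ eapply bound_ren; eauto; intros; lia.
           ++ simpl in Bq; auto.
           ++ exists (fall r); split; [apply isAll_q; auto| split; [simpl; auto|]].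
              intros M rho. rewrite <- all_r. split; intros H d; [apply holds_bop, Sr, H | apply Sr, holds_bop, H].
      * destruct (IHs p1 (ren_f S q) (S m)) as [r [Hr [Br Sr]]].
        -- rewrite fsize_ren; simpl in Hs; lia.
        -- auto.
        -- apply lvl_ren; auto.
        -- simpl in Bp; auto.
        -- eapply bound_ren; eauto; intros; lia.
        -- exists (fall r); split; [apply isAll_q; auto| split; [simpl; auto|]].
           intros M rho. rewrite <- all_l. split; intros H d; [apply holds_bop, Sr, H | apply Sr, holds_bop, H].
Qed.
End Comb.
Unset Implicit Arguments.


Section UP.
Variables (L : language) (I : Type) (M : I -> structure L) (U : (I -> Prop) -> Prop).
Hypothesis UI : forall X Y, U X -> U Y -> U (fun i => X i /\ Y i).
Hypothesis US : forall X Y : I -> Prop, (forall i, X i -> Y i) -> U X -> U Y.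
Hypothesis U0 : ~ U (fun _ => False).
Hypothesis UU : forall X, U X \/ U (fun i => ~ X i).

Lemma UT : U (fun _ => True).
Proof. destruct (UU (fun _ => True)) as [H|H]; eapply US; eauto; simpl; auto. Qed.

Lemma Uall (X : I -> Prop) : (forall i, X i) -> U X.
Proof. intro H; eapply US; [|apply UT]; auto. Qed.

Lemma Unot X : U X -> ~ U (fun i => ~ X i).
Proof. intros H1 H2. apply U0. eapply US; [|apply (UI _ _ H1 H2)]. simpl; tauto. Qed.

Lemma Ufin : forall n (X : Fin.t n -> I -> Prop), (forall j, U (X j)) -> U (fun i => forall j, X j i).
Proof.
  induction n as [|n IH]; intros X H.
  - apply Uall. intros i j. inversion j.
  - specialize (IH (fun j => X (Fin.FS j)) (fun j => H (Fin.FS j))).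
    eapply US; [|apply (UI _ _ (H Fin.F1) IH)]. simpl.
    intros i [H1 H2] j. apply (Fin.caseS' j); auto.
Qed.

Definition D := forall i, dom (M i).
Definition eqU (x y : D) : Prop := U (fun i => x i = y i).
Definition cls (x : D) : D -> Prop := fun y => eqU x y.
Definition Q := {P : D -> Prop | exists x, P = cls x}.
Definition repr (q : Q) : D := proj1_sig (constructive_indefinite_description _ (proj2_sig q)).
Lemma repr_spec q : proj1_sig q = cls (repr q).
Proof. unfold repr. destruct (constructive_indefinite_description _ (proj2_sig q)); auto. Qed.
Definition mk (x : D) : Q := exist _ (cls x) (ex_intro _ x eq_refl).

Lemma eqU_refl x : eqU x x.
Proof. apply Uall; auto. Qed.
Lemma eqU_sym x y : eqU x y -> eqU y x.
Proof. apply US; auto. Qed.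
Lemma eqU_trans x y z : eqU x y -> eqU y z -> eqU x z.
Proof. intros H1 H2. eapply US; [|apply (UI _ _ H1 H2)]. simpl; intros i [-> ->]; auto. Qed.

Lemma mk_eq x y : mk x = mk y <-> eqU x y.
Proof.
  split.
  - intro H. assert (E : cls x = cls y) by (apply (f_equal (@proj1_sig _ _)) in H; exact H).
    assert (cls y y) by apply eqU_refl. rewrite <- E in H0. exact H0.
  - intro H. unfold mk.
    assert (E : cls x = cls y).
    { apply functional_extensionality; intro z; apply propositional_extensionality; unfold cls; split; intro.
      - eapply eqU_trans; [apply eqU_sym; eauto| auto].
      - eapply eqU_trans; eauto. }
    revert E. generalize (ex_intro (fun x0 : D => cls x = cls x0) x eq_refl).
    generalize (ex_intro (fun x0 : D => cls y = cls x0) y eq_refl).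
    intros e1 e2 E. revert e2. rewrite E. intro e2. f_equal. apply proof_irrelevance.
Qed.

Lemma mk_repr q : mk (repr q) = q.
Proof.
  destruct q as [P e]. unfold mk.
  assert (E : cls (repr (exist _ P e)) = P) by (symmetry; apply (repr_spec (exist _ P e))).
  revert E. generalize (ex_intro (fun x0 : D => cls (repr (exist _ P e)) = cls x0) (repr (exist _ P e)) eq_refl).
  generalize (repr (exist _ P e)). intros x e1 E. subst P. f_equal. apply proof_irrelevance.
Qed.

Lemma repr_mk x : eqU (repr (mk x)) x.
Proof. apply mk_eq. apply mk_repr. Qed.

Definition pick (i : I) : dom (M i) := epsilon (dom_inh (M i)) (fun _ => True).

Definition UP : structure L := {|
  dom := Q;
  dom_inh := inhabits (mk pick);
  interp_f := fun f args => mk (fun i => interp_f (M i) f (fun j => repr (args j) i));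
  interp_r := fun R args => U (fun i => interp_r (M i) R (fun j => repr (args j) i)) |}.

Definition envi (rho : nat -> Q) (i : I) : nat -> dom (M i) := fun k => repr (rho k) i.

Lemma los_t t : forall rho : nat -> dom UP, eval_t UP rho t = mk (fun i => eval_t (M i) (envi rho i) t).
Proof.
  induction t as [k|f v IH]; intro rho; simpl.
  - unfold envi. symmetry. apply mk_repr.
  - apply mk_eq.
    eapply US; [|apply (Ufin _ (fun j i => repr (eval_t UP rho (v j)) i = eval_t (M i) (envi rho i) (v j)))].
    + simpl. intros i Hi. f_equal. apply functional_extensionality. auto.
    + intro j. rewrite IH. apply repr_mk.
Qed.

Lemma envi_scons d rho i k : envi (scons d rho) i k = scons (repr d i) (envi rho i) k.
Proof. destruct k; reflexivity. Qed.

Lemma los p : forall rho : nat -> dom UP, holds UP rho p <-> U (fun i => holds (M i) (envi rho i) p).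
Proof.
  induction p; intro rho; simpl.
  - split; [tauto | apply U0].
  - rewrite !los_t. apply mk_eq.
  - assert (HF : U (fun i => forall j, repr (eval_t UP rho (t j)) i = eval_t (M i) (envi rho i) (t j))).
    { apply (Ufin _ (fun j i => repr (eval_t UP rho (t j)) i = eval_t (M i) (envi rho i) (t j))).
      intro j. rewrite los_t. apply repr_mk. }
    split; intro H.
    + eapply US; [|apply (UI _ _ H HF)].
      simpl. intros i [H1 H2].
      assert (E : (fun j => repr (eval_t UP rho (t j)) i) = (fun j => eval_t (M i) (envi rho i) (t j)))
        by (apply functional_extensionality; auto).
      rewrite <- E; auto.
    + eapply US; [|apply (UI _ _ H HF)].
      simpl. intros i [H1 H2].
      assert (E : (fun j => repr (eval_t UP rho (t j)) i) = (fun j => eval_t (M i) (envi rho i) (t j)))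
        by (apply functional_extensionality; auto).
      rewrite E; auto.
  - rewrite IHp. split; intro H.
    + destruct (UU (fun i => holds (M i) (envi rho i) p)); tauto.
    + intro HX; exact (Unot _ HX H).
  - rewrite IHp1, IHp2. split.
    + intros [H1 H2]; apply UI; auto.
    + intro H; split; eapply US; eauto; simpl; tauto.
  - rewrite IHp1, IHp2. split.
    + intros [H1|H1]; eapply US; eauto; simpl; tauto.
    + intro H. destruct (UU (fun i => holds (M i) (envi rho i) p1)) as [H1|H1]; [left; auto|right].
      eapply US; [|apply (UI _ _ H H1)]. simpl; tauto.
  - rewrite IHp1, IHp2. split.
    + intro H. destruct (UU (fun i => holds (M i) (envi rho i) p1)) as [H1|H1].
      * eapply US; [|apply (H H1)]. simpl; tauto.
      * eapply US; [|apply H1]. simpl; tauto.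
    + intros H H1. eapply US; [|apply (UI _ _ H H1)]. simpl; tauto.
  - assert (HH : forall d, holds UP (scons d rho) p <-> U (fun i => holds (M i) (scons (repr d i) (envi rho i)) p)).
    { intro d. rewrite IHp. split; apply US; intros i; apply holds_ext; intro k; rewrite envi_scons; auto. }
    split.
    + intro H. apply NNPP. intro Hn.
      destruct (UU (fun i => forall d, holds (M i) (scons d (envi rho i)) p)) as [H1|H1]; [tauto|].
      set (x := fun i => epsilon (dom_inh (M i)) (fun e => ~ holds (M i) (scons e (envi rho i)) p)).
      pose proof (proj1 (HH (mk x)) (H (mk x))) as H2.
      apply U0. eapply US; [|apply (UI _ _ (UI _ _ H1 H2) (repr_mk x))].
      simpl. intros i [[H3 H4] H5]. rewrite H5 in H4.
      assert (ex : exists e, ~ holds (M i) (scons e (envi rho i)) p) by (apply not_all_ex_not; auto).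
      apply (epsilon_spec (dom_inh (M i)) _ ex). exact H4.
    + intros H d. apply HH. eapply US; [|apply H]. simpl; auto.
  - assert (HH : forall d, holds UP (scons d rho) p <-> U (fun i => holds (M i) (scons (repr d i) (envi rho i)) p)).
    { intro d. rewrite IHp. split; apply US; intros i; apply holds_ext; intro k; rewrite envi_scons; auto. }
    split.
    + intros [d H]. apply HH in H. eapply US; [|apply H]. simpl; eauto.
    + intro H.
      set (x := fun i => epsilon (dom_inh (M i)) (fun e => holds (M i) (scons e (envi rho i)) p)).
      exists (mk x). apply HH.
      eapply US; [|apply (UI _ _ H (repr_mk x))].
      simpl. intros i [H3 H5]. rewrite H5.
      apply (epsilon_spec (dom_inh (M i)) _ H3).
Qed.

End UP.

Lemma compactness L (G : fset L) :
  (forall l : list (form L), (forall p, In p l -> G p) ->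
     exists M : structure L, forall p, In p l -> models M p) -> consistent G.
Proof.
  intro H.
  assert (Hex : forall i : list (form L), exists M : structure L, forall p, In p i -> G p -> models M p).
  { intro i. assert (exists l, (forall p, In p l -> G p) /\ (forall p, In p i -> G p -> In p l)) as [l [H1 H2]].
    { induction i as [|a i [l [H1 H2]]].
      - exists nil; simpl; tauto.
      - destruct (classic (G a)).
        + exists (a :: l); simpl; split; [intros p [<-|]; auto| intros p [<-|]; auto].
        + exists l; split; auto. intros p [<-|]; auto; tauto. }
    destruct (H l H1) as [M HM]; exists M; auto. }
  set (Mi := fun i => proj1_sig (constructive_indefinite_description _ (Hex i))).
  assert (HMi : forall i p, In p i -> G p -> models (Mi i) p).
  { intro i. unfold Mi. destruct (constructive_indefinite_description _ (Hex i)); auto. }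
  set (F := fun X : list (form L) -> Prop => exists l, (forall p, In p l -> G p) /\
              forall i, (forall p, In p l -> In p i) -> X i).
  destruct (@UF.ultra_exists _ F) as [U [HFU [UI [US [U0 UU]]]]].
  - exists nil; split; simpl; tauto.
  - intros X Y [l1 [H1 H2]] [l2 [H3 H4]]. exists (l1 ++ l2). split.
    + intros p Hp; apply in_app_or in Hp; destruct Hp; auto.
    + intros i Hi; split; [apply H2 | apply H4]; intros p Hp; apply Hi; apply in_or_app; auto.
  - intros X Y HXY [l [H1 H2]]. exists l; split; auto.
  - intros [l [H1 H2]]. apply (H2 l); auto.
  - exists (@UP L _ Mi U). intros p Gp rho.
    apply (@los L _ Mi U UI US U0 UU).
    apply (US (fun i => In p i)).
    + intros i Hi. apply HMi; auto.
    + apply HFU. exists (p :: nil). split.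
      * intros q [<-|[]]; auto.
      * intros i Hi; apply Hi; simpl; auto.
Qed.


Section Main.
Variable L : language.

Lemma qf_lvl (p : form L) : qfree p -> forall n, isEx n p /\ isAll n p.
Proof.
  intros H n; induction n as [|n [IH1 IH2]].
  - split; constructor; auto.
  - split; [apply isEx_lift | apply isAll_lift]; auto.
Qed.

Lemma lam_bot k n : level_set (L:=L) k n fbot.
Proof. split; [exact I|]. destruct k; apply qf_lvl; exact I. Qed.

Lemma lam_top k n : level_set (L:=L) k n (fneg fbot).
Proof. split; [exact I|]. destruct k; apply qf_lvl; exact I. Qed.

Lemma lam_comb k n b (p q : form L) : level_set k n p -> level_set k n q ->
  exists r, level_set k n r /\ forall M rho, holds M rho r <-> bsem b (holds M rho p) (holds M rho q).
Proof.
  destruct (comb L b n) as [CE CA]. destruct k; intros [Sp Hp] [Sq Hq].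
  - destruct (CE _ p q 0 (le_n _) Hp Hq Sp Sq) as [r [H1 [H2 H3]]]. exists r; split; [split; auto| exact H3].
  - destruct (CA _ p q 0 (le_n _) Hp Hq Sp Sq) as [r [H1 [H2 H3]]]. exists r; split; [split; auto| exact H3].
Qed.

Lemma big_and k n (l : list (form L)) : (forall p, In p l -> level_set k n p) ->
  exists r, level_set k n r /\ forall M rho, holds M rho r <-> (forall p, In p l -> holds M rho p).
Proof.
  induction l as [|a l IH]; intro H.
  - exists (fneg fbot); split; [apply lam_top|]. simpl; tauto.
  - destruct IH as [r0 [H0 S0]]; [intros; apply H; simpl; auto|].
    destruct (lam_comb k n true a r0 (H a (or_introl eq_refl)) H0) as [r [Hr Sr]].
    exists r; split; auto. intros M rho. rewrite Sr. simpl. rewrite S0. split.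
    + intros [H1 H2] p [<-|Hp]; auto.
    + intros H1; split; auto.
Qed.

Lemma big_or k n (l : list (form L)) : (forall p, In p l -> level_set k n p) ->
  exists r, level_set k n r /\ forall M rho, holds M rho r <-> (exists p, In p l /\ holds M rho p).
Proof.
  induction l as [|a l IH]; intro H.
  - exists fbot; split; [apply lam_bot|]. simpl. split; [tauto|]. intros [p [[] _]].
  - destruct IH as [r0 [H0 S0]]; [intros; apply H; simpl; auto|].
    destruct (lam_comb k n false a r0 (H a (or_introl eq_refl)) H0) as [r [Hr Sr]].
    exists r; split; auto. intros M rho. rewrite Sr. simpl. rewrite S0. split.
    + intros [H1|[p [H1 H2]]]; eauto.
    + intros [p [[<-|Hp] H2]]; eauto.
Qed.

Definition env0 (M : structure L) : nat -> dom M := fun _ => epsilon (dom_inh M) (fun _ => True).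

Lemma models_iff (M : structure L) p rho : sentence p -> (models M p <-> holds M rho p).
Proof. intro Hs; split; [auto|]. intros H rho'. eapply sent_holds; eauto. Qed.

Definition ThM (M : structure L) : fset L := fun p => sentence p /\ models M p.

Lemma ThM_cct M : complete_consistent_theory (ThM M).
Proof.
  split; [|split; [|split]].
  - intros p [H _]; auto.
  - intros p Hs He. split; auto. apply He. intros q [_ Hq]; auto.
  - intros p Hs. destruct (classic (models M p)) as [H|H].
    + left. intros N HN. apply (HN p); split; auto.
    + right. intros N HN. apply (HN (fneg p)). split; [exact Hs|].
      intros rho Hp. apply H. rewrite (models_iff M p rho Hs). auto.
  - exists M. intros p [_ H]; auto.
Qed.

Lemma part2 (k : qkind) (n : nat) (A : fset L) (phi : form L)
  (hA : is_theory A) (hphi : sentence phi) (T : fset L) (hT : is_theory T) :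
  consistent (funion T (funion (funion A (fsingle phi))
                   (Th (level_set k n) (funion A (fsingle (fneg phi)))))) ->
     exists Tp Tm : fset L,
      complete_consistent_theory Tp /\ complete_consistent_theory Tm /\
      fsubset (funion A (fsingle phi)) Tp /\
      fsubset (funion A (fsingle (fneg phi))) Tm /\
      fsubset (finter (level_set k n) Tm) (finter (level_set k n) Tp) /\
      fsubset T Tp.
Proof.
  intros [M HM].
  set (G := funion (funion A (fsingle (fneg phi)))
              (fun q => exists lam, level_set k n lam /\ ~ models M lam /\ q = fneg lam)).
  assert (HG : consistent G).
  { apply compactness. intros l Hl. apply NNPP. intro Hno.
    assert (exists ls, (forall lam, In lam ls -> level_set k n lam /\ ~ models M lam) /\
              forall p, In p l -> funion A (fsingle (fneg phi)) p \/ exists lam, In lam ls /\ p = fneg lam)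
      as [ls [Hls Hcov]].
    { clear Hno. induction l as [|a l IH].
      - exists nil; simpl; split; tauto.
      - destruct IH as [ls [H1 H2]]; [intros; apply Hl; simpl; auto|].
        destruct (Hl a (or_introl eq_refl)) as [Ha|[lam [Hl1 [Hl2 ->]]]].
        + exists ls; split; auto. intros p [<-|Hp]; auto.
        + exists (lam :: ls); split.
          * intros x [<-|Hx]; auto.
          * intros p [<-|Hp]; [right; exists lam; simpl; auto|].
            destruct (H2 p Hp) as [|[x [Hx ->]]]; [left; auto| right; exists x; simpl; auto]. }
    destruct (big_or k n ls) as [sig [Hsig Ssig]]; [intros; apply Hls; auto|].
    assert (Ent : entails (funion A (fsingle (fneg phi))) sig).
    { intros N HN rho. apply NNPP. intro Hn. apply Hno. exists N. intros p Hp.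
      destruct (Hcov p Hp) as [Hp'|[lam [Hlam ->]]]; [apply HN; auto|].
      intros rho' Hl'. apply Hn. apply Ssig. exists lam; split; auto.
      destruct (Hls lam Hlam) as [[Hs _] _]. eapply sent_holds; eauto. }
    assert (Msig : models M sig).
    { apply HM. right. right. split; auto. split; auto. destruct Hsig; auto. }
    destruct (proj1 (Ssig M (env0 M)) (Msig (env0 M))) as [lam [Hlam Hh]].
    destruct (Hls lam Hlam) as [[Hs _] Hnm]. apply Hnm. apply (models_iff M lam (env0 M) Hs). auto. }
  destruct HG as [N HN].
  exists (ThM M), (ThM N). split; [apply ThM_cct|]. split; [apply ThM_cct|].
  split; [|split; [|split]].
  - intros p Hp. split.
    + destruct Hp as [Hp| ->]; [apply hA; auto| exact hphi].
    + apply HM. right. left. auto.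
  - intros p Hp. split.
    + destruct Hp as [Hp| ->]; [apply hA; auto| exact hphi].
    + apply HN. left. auto.
  - intros lam [Hl [Hs Hm]]. split; auto. split; auto.
    apply NNPP. intro Hnm.
    assert (HH : models N (fneg lam)) by (apply HN; right; exists lam; auto).
    apply (HH (env0 N)). apply Hm.
  - intros p Hp. split; [apply hT; auto|]. apply HM. left. auto.
Qed.

End Main.


Theorem lemma4p5 (L : language) (k : qkind) (n : nat)
  (A : fset L) (phi : form L)
  (hA : is_theory A) (hphi : sentence phi)
  (hyp : forall psi, neg_set (level_set k n) psi ->
           ~ entails A (fiff phi psi)) :
  (exists Tp Tm : fset L,
      complete_consistent_theory Tp /\ complete_consistent_theory Tm /\
      fsubset (funion A (fsingle phi)) Tp /\
      fsubset (funion A (fsingle (fneg phi))) Tm /\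
      fsubset (finter (level_set k n) Tm) (finter (level_set k n) Tp))
  /\
  (forall T : fset L, is_theory T ->
     consistent (funion T (funion (funion A (fsingle phi))
                   (Th (level_set k n) (funion A (fsingle (fneg phi)))))) ->
     exists Tp Tm : fset L,
      complete_consistent_theory Tp /\ complete_consistent_theory Tm /\
      fsubset (funion A (fsingle phi)) Tp /\
      fsubset (funion A (fsingle (fneg phi))) Tm /\
      fsubset (finter (level_set k n) Tm) (finter (level_set k n) Tp) /\
      fsubset T Tp).
Proof.
  split; [| intros T hT; apply part2; auto].
  assert (HC : consistent (funion (fun _ : form L => False) (funion (funion A (fsingle phi))
                   (Th (level_set k n) (funion A (fsingle (fneg phi))))))).
  { apply compactness. intros l Hl. apply NNPP. intro Hno.
    assert (exists ls, (forall s, In s ls -> Th (level_set k n) (funion A (fsingle (fneg phi))) s) /\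
              forall p, In p l -> funion A (fsingle phi) p \/ In p ls) as [ls [Hls Hcov]].
    { clear Hno. induction l as [|a l IH].
      - exists nil; simpl; split; tauto.
      - destruct IH as [ls [H1 H2]]; [intros; apply Hl; simpl; auto|].
        destruct (Hl a (or_introl eq_refl)) as [[]|[Ha|Ha]].
        + exists ls; split; auto. intros p [<-|Hp]; auto.
        + exists (a :: ls); split.
          * intros x [<-|Hx]; auto.
          * intros p [<-|Hp]; [right; simpl; auto|].
            destruct (H2 p Hp); [left; auto| right; simpl; auto]. }
    destruct (big_and L k n ls) as [sig [Hsig Ssig]]; [intros s Hs; apply Hls; auto|].
    apply (hyp (fneg sig)).
    - split; [destruct Hsig; exact H|]. exists sig; split; auto.
      intros N _ rho. simpl. tauto.
    - intros N HN rho. simpl. split.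
      + intros Hphi Hsg. apply Hno. exists N. intros p Hp.
        destruct (Hcov p Hp) as [Hp'|Hp'].
        * destruct Hp' as [Hp'| ->]; [apply HN; auto|].
          intro rho'. eapply sent_holds; eauto.
        * intro rho'. destruct (Hls p Hp') as [[Hs _] _].
          apply (proj1 (Ssig N rho) Hsg p) in Hp'. eapply sent_holds; eauto.
      + intros Hns. apply NNPP. intro Hnp. apply Hns.
        apply Ssig. intros s Hs. destruct (Hls s Hs) as [_ [_ He]].
        apply He. intros q [Hq| ->]; [apply HN; auto|].
        intro rho'. simpl. intro Hp. apply Hnp. eapply sent_holds; eauto. }
  destruct (part2 L k n A phi hA hphi (fun _ => False) (fun _ H => False_ind _ H) HC)
    as [Tp [Tm [H1 [H2 [H3 [H4 [H5 _]]]]]]].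
  exists Tp, Tm; auto.
Qed.
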